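(* Let $M$ be a real symmetric $n\times n$ matrix with exactly one positive eigenvalue and $n-1$ negative eigenvalues (and no zero eigenvalue), and write $\det(xI-M)=\sum_{k=0}^n a_kx^k$. (1) If $\mathrm{Trace}(M)=0$, then the sequence $|a_0|,|a_1|,\ldots,|a_{n-2}|$ is log-concave and unimodal. (2) If $\mathrm{Trace}(M)>0$, then the sequence $|a_0|,|a_1|,\ldots,|a_{n-1}|$ is log-concave and unimodal.
   Context: A sequence $a_0,\dots,a_m$ is unimodal if there is an index $k$ with $a_{j-1}\le a_j$ for $j\le k$ and $a_j\ge a_{j+1}$ for $j\ge k$; it is log-concave if $a_i^2\ge a_{i-1}a_{i+1}$ for $1\le i\le m-1$. *)

(* Defs.v *)
From HB Require Import structures.
From mathcomp Require Import all_boot all_order all_algebra.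
From mathcomp Require Import reals.
Set Implicit Arguments. Unset Strict Implicit. Unset Printing Implicit Defensive.
Import Order.TTheory GRing.Theory Num.Theory.
Local Open Scope ring_scope.

Definition unimodal (R : numDomainType) (a : nat -> R) (m : nat) : Prop :=
  exists k : nat, (k <= m)%N /\
    (forall j : nat, (1 <= j <= k)%N -> a j.-1 <= a j) /\
    (forall j : nat, (k <= j < m)%N -> a j.+1 <= a j).

Definition log_concave (R : numDomainType) (a : nat -> R) (m : nat) : Prop :=
  forall i : nat, (1 <= i <= m.-1)%N -> a i.-1 * a i.+1 <= a i ^+ 2.

Definition one_pos_rest_neg (R : realType) (n : nat) (M : 'M[R]_n) : Prop :=
  exists lam : 'I_n -> R,
    char_poly M = \prod_(i < n) ('X - (lam i)%:P) /\
    exists i0 : 'I_n, 0 < lam i0 /\ forall i : 'I_n, i != i0 -> lam i < 0.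

(* Main.v *)
Require Import Defs.
From HB Require Import structures.
From mathcomp Require Import all_boot all_order all_algebra.
From mathcomp Require Import reals.
From mathcomp.real_closed Require Import polyrcf.
From mathcomp Require Import zify ring lra.
Import Order.TTheory GRing.Theory Num.Theory.
Local Open Scope ring_scope.

Section Aux.
Variable R : realType.

Definition PX (s : seq R) : {poly R} := \prod_(x <- s) ('X - x%:P).
Definition splitp (q : {poly R}) := exists c s, q = c *: PX s.

Lemma PX_cons a s : PX (a :: s) = ('X - a%:P) * PX s.
Proof. by rewrite /PX big_cons. Qed.

Lemma PX_cat s t : PX (s ++ t) = PX s * PX t.
Proof. by rewrite /PX big_cat. Qed.

Lemma size_PX s : size (PX s) = (size s).+1.
Proof. by rewrite /PX size_prod_XsubC. Qed.

Lemma root_PX s x : root (PX s) x = (x \in s).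
Proof. by rewrite /PX root_prod_XsubC. Qed.

Lemma L1 (u v : seq R) : all (fun y => y \in v) u -> PX u %| (PX u)^`() * PX v.
Proof.
elim: u => [|y u IH] /=; first by rewrite /PX big_nil dvd1p.
move=> /andP[yv hu].
rewrite PX_cons derivM derivXsubC mul1r [X in _ %| X]mulrDl.
apply: dvdp_add.
  rewrite mulrC; apply: dvdp_mul => //.
  by rewrite dvdp_XsubCl root_PX.
rewrite -mulrA; apply: dvdp_mul => //; exact: IH.
Qed.

Lemma L2 (w : seq R) (D q : {poly R}) : D %| q -> uniq w -> all (root q) w ->
  all (fun x => D.[x] != 0) w -> D * PX w %| q.
Proof.
elim: w D => [|x w IH] D /=; first by rewrite /PX big_nil mulr1.
move=> hD /andP[xw uw] /andP[rx rw] /andP[Dx Dw].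
rewrite PX_cons mulrA; apply: IH => //.
- rewrite Gauss_dvdp ?coprimep_XsubC // hD /= dvdp_XsubCl //.
- apply/allP => y yw; rewrite hornerM hornerXsubC mulf_neq0 //.
    exact: (allP Dw).
  by rewrite subr_eq0; apply: contraNneq xw => <-.
Qed.

Lemma rolle_list (P : {poly R}) (v : seq R) : sorted <%R v -> all (root P) v ->
  exists w, [/\ size w = (size v).-1, uniq w, all (root P^`()) w,
     all (fun x => x \notin v) w & all (fun x => head 0 v < x) w].
Proof.
elim: v => [|a v IH]; first by move=> _ _; exists [::].
case: v IH => [|b v2] IH; first by move=> _ _; exists [::].
move=> /= /andP[ab pv] /and3P[ra rb rv].
have hr1 : all (root P) (b :: v2) by rewrite /= rb rv.
have [w1 [s1 u1 r1 n1 h1]] := IH pv hr1.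
have [c + rc] : {c : R | c \in `]a, b[ & P^`().[c] = 0}.
  apply: poly_rolle => //; by rewrite (rootP ra) (rootP rb).
rewrite in_itv /= => /andP[ac cb].
have v2b : all (fun x => b < x) v2 by apply: order_path_min pv; exact: lt_trans.
exists (c :: w1); split => /=.
- by rewrite s1.
- rewrite u1 andbT; apply/negP => cw; have := allP h1 c cw => /=.
  by rewrite ltNge (ltW cb).
- by rewrite r1 andbT; apply/rootP.
- rewrite !inE negb_or (gt_eqF ac) (lt_eqF cb) /=.
  apply/andP; split.
    apply/negP => cv; have := allP v2b c cv; by rewrite ltNge (ltW cb).
  apply/allP => x xw; have := allP n1 x xw; rewrite !inE negb_or => /andP[xb xv2]. rewrite (negPf xb) (negPf xv2) orbF.
  have := allP h1 x xw => /= bx; by rewrite gt_eqF // (lt_trans ab bx).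
- rewrite ac /=; apply/allP => x xw; have := allP h1 x xw => /= bx.
  exact: lt_trans ab bx.
Qed.

Lemma perm_undup_ex (s : seq R) : exists u, perm_eq s (u ++ undup s).
Proof.
elim: s => [|x s [u pu]] /=; first by exists [::].
case: ifP => xs.
  by exists (x :: u); rewrite /= perm_cons.
exists u; rewrite -cat1s perm_sym -cat1s perm_catCA perm_cat2l perm_sym //.
Qed.

Lemma deriv_PX (s : seq R) : exists c t, (PX s)^`() = c *: PX t.
Proof.
case: s => [|x0 s0]; first by exists 0, [::]; rewrite /PX big_nil -polyC1 derivC scale0r.
set s := x0 :: s0.
have [u pu] := perm_undup_ex s.
set v := undup s.
have Pe : PX s = PX u * PX v by rewrite -PX_cat /PX (perm_big _ pu).
have us : all (fun y => y \in v) u.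
  apply/allP => y yu; rewrite mem_undup (perm_mem pu) mem_cat yu //.
have hA : PX u %| (PX s)^`().
  rewrite Pe derivM; apply: dvdp_add; first exact: L1.
  exact: dvdp_mulr (dvdpp _).
set vs := sort <=%R v.
have svs : sorted <%R vs by rewrite sort_lt_sorted undup_uniq.
have rvs : all (root (PX s)) vs.
  by apply/allP => y; rewrite mem_sort mem_undup root_PX.
have [w [sw uw rw nw _]] := rolle_list (PX s) vs svs rvs.
have hAw : PX u * PX w %| (PX s)^`().
  apply: L2 => //; apply/allP => y yw.
  have := allP nw y yw; rewrite mem_sort mem_undup => ys.
  apply/negP => /rootP h; move: ys; rewrite (perm_mem pu) mem_cat.
  have : root (PX u) y by apply/rootP.
  by rewrite root_PX => ->.
have ss : size s = (size u + size v)%N by rewrite (perm_size pu) size_cat.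
have v0 : (0 < size v)%N.
  have : x0 \in v by rewrite mem_undup inE eqxx.
  by case: (v).
have sAw : size (PX u * PX w) = size s.
  by rewrite -PX_cat size_PX size_cat sw size_sort ss -addnS prednK.
have sz0 : (0 < size s)%N by [].
have P'0 : (PX s)^`() != 0.
  apply/eqP => h.
  have : ((PX s)^`())`_(size s).-1 = 1 *+ size s.
    rewrite coef_deriv prednK //.
    have : lead_coef (PX s) = 1 by apply/monicP; exact: monic_prod_XsubC.
    by rewrite lead_coefE size_PX /= => ->.
  by rewrite h coef0 => /eqP; rewrite eq_sym pnatr_eq0 eqn0Ngt sz0.
have sP' : (size (PX s)^`() <= size s)%N.
  by have := lt_size_deriv (monic_neq0 (monic_prod_XsubC s (fun _ => true) id)); rewrite -/(PX s) size_PX.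
have : PX u * PX w %= (PX s)^`().
  rewrite -(dvdp_size_eqp hAw) sAw eqn_leq sP' andbT -{1}sAw; exact: dvdp_leq.
case/eqpP => [[c1 c2] /andP[c10 c20] /= e].
exists (c1 / c2), (u ++ w).
by rewrite PX_cat mulrC -scalerA e scalerA mulVf // scale1r.
Qed.

Lemma splitp_deriv q : splitp q -> splitp q^`().
Proof.
case=> c [s ->]; have [c' [t e]] := deriv_PX s.
by exists (c * c'), t; rewrite derivZ e scalerA.
Qed.

Lemma splitp_derivn q k : splitp q -> splitp (q^`(k)).
Proof.
move=> h; elim: k => [|k IH]; first by rewrite derivn0.
by rewrite derivnS; apply: splitp_deriv.
Qed.

Lemma lag_PX s x : 0 <= (PX s)^`().[x] ^+ 2 - (PX s).[x] * (PX s)^`()^`().[x].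
Proof.
elim: s => [|a s IH].
  by rewrite /PX big_nil -polyC1 !derivC !horner0 mulr0 expr0n /= subrr.
rewrite PX_cons !derivE !hornerE.
set g0 := (PX s).[x] in IH *; set g1 := (PX s)^`().[x] in IH *.
set g2 := (PX s)^`()^`().[x] in IH *.
change (0 <= (g0 + (x - a) * g1) ^+ 2 - (x - a) * g0 * (g1 + g1 + (x - a) * g2)).
have -> : (g0 + (x - a) * g1) ^+ 2 - (x - a) * g0 * (g1 + g1 + (x - a) * g2)
   = g0 ^+ 2 + (x - a) ^+ 2 * (g1 ^+ 2 - g0 * g2) by ring.
by rewrite addr_ge0 ?sqr_ge0 // mulr_ge0 ?sqr_ge0.
Qed.

Lemma lag q x : splitp q -> 0 <= q^`().[x] ^+ 2 - q.[x] * q^`()^`().[x].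
Proof.
case=> c [s ->]; rewrite !derivZ !hornerZ.
have -> : (c * (PX s)^`().[x]) ^+ 2 - c * (PX s).[x] * (c * (PX s)^`()^`().[x])
  = c ^+ 2 * ((PX s)^`().[x] ^+ 2 - (PX s).[x] * (PX s)^`()^`().[x]) by ring.
by rewrite mulr_ge0 ?sqr_ge0 ?lag_PX.
Qed.

Lemma newton_alg (f0 f1 f2 A k1 : R) : 0 < A -> 0 < k1 ->
  0 <= (f1 * (k1 * A)) ^+ 2 - (f0 * A) * (f2 * ((k1 + 1) * (k1 * A))) ->
  f0 * f2 <= f1 ^+ 2 /\ (0 < f0 * f2 -> f0 * f2 < f1 ^+ 2).
Proof.
move=> A0 k10.
have -> : (f1 * (k1 * A)) ^+ 2 - (f0 * A) * (f2 * ((k1 + 1) * (k1 * A)))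
   = (A ^+ 2 * k1) * (f1 ^+ 2 * k1 - f0 * f2 * (k1 + 1)) by ring.
rewrite pmulr_rge0; last by rewrite mulr_gt0 ?exprn_gt0.
move=> H.
have H2 : 0 < f0 * f2 -> f0 * f2 < f1 ^+ 2.
  move=> P; rewrite -subr_gt0.
  have : 0 < (f1 ^+ 2 - f0 * f2) * k1.
    apply: lt_le_trans P _; rewrite -subr_ge0.
    by have -> : (f1 ^+ 2 - f0 * f2) * k1 - f0 * f2 = f1 ^+ 2 * k1 - f0 * f2 * (k1 + 1) by ring.
  by rewrite pmulr_lgt0.
split=> //.
case: (lerP (f0 * f2) 0) => P; last by apply/ltW/H2.
exact: le_trans P (sqr_ge0 _).
Qed.

Lemma newton q j : splitp q ->
  q`_j * q`_j.+2 <= q`_j.+1 ^+ 2 /\ (0 < q`_j * q`_j.+2 -> q`_j * q`_j.+2 < q`_j.+1 ^+ 2).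
Proof.
move=> h; have := lag (q^`(j)) 0 (splitp_derivn q j h).
rewrite -!derivnS !horner_coef0 !coef_derivn !addn0 !ffactnn.
rewrite (factS j.+1) (factS j) -[q`_j.+1 *+ _]mulr_natr -[q`_j *+ _]mulr_natr.
rewrite -[q`_j.+2 *+ _]mulr_natr !natrM -(natr1 j.+1).
apply: newton_alg; by rewrite ltr0n ?fact_gt0.
Qed.

Lemma PX_neg_coef s : all (fun x => x < 0) s ->
  (forall k, 0 <= (PX s)`_k) /\ (forall k, (k < (size s).+1)%N -> 0 < (PX s)`_k).
Proof.
elim: s => [|a s IH] /=.
  by move=> _; rewrite /PX big_nil; split=> k; rewrite coef1; case: k.
move=> /andP[a0 /IH [H1 H2]].
have ce k : (PX (a :: s))`_k = (if k == 0%N then 0 else (PX s)`_k.-1) - a * (PX s)`_k.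
  by rewrite PX_cons mulrBl coefB coefXM coefCM.
have na k : 0 <= - a * (PX s)`_k by apply: mulr_ge0 => //; rewrite oppr_ge0 ltW.
split=> k; rewrite ce -mulNr.
  by case: k => [|k] /=; rewrite ?add0r ?addr_ge0.
case: k => [|k] /= hk; first by rewrite add0r mulr_gt0 ?oppr_gt0 ?H2.
by rewrite ltr_wpDr ?H2.
Qed.

Lemma unimodal_of (b : nat -> R) m : (forall k, (k <= m)%N -> 0 < b k) ->
  (forall j, (j.+2 <= m)%N -> b j * b j.+2 <= b j.+1 ^+ 2) -> unimodal b m.
Proof.
elim: m => [|m IH] hp hl.
  by exists 0%N; split => //; split => j /andP[h1 h2]; [have := leq_trans h1 h2 | rewrite ltn0 in h2].
have [k [km [inc dec]]] := IH (fun k hk => hp k (leqW hk)) (fun j hj => hl j (leqW hj)).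
case: (ltnP k m) => hkm.
  exists k; split; first lia.
  split=> // j /andP[kj jm].
  case: (ltnP j m) => hjm; first by apply: dec; rewrite kj hjm.
  have -> : j = m by lia.
  case: m IH hp hl km inc dec kj jm hjm hkm => [|m'] // IH hp hl km inc dec kj jm hjm hkm.
  have d1 : b m'.+1 <= b m' by apply: dec; lia.
  have l1 := hl m' (leqnn _).
  have p0 : 0 < b m' by apply: hp; lia.
  have p1 : 0 < b m'.+1 by apply: hp; lia.
  have p2 : 0 < b m'.+2 by apply: hp; lia.
  nra.
have km' : k = m by lia.
subst k.
case: (lerP (b m) (b m.+1)) => hb.
  exists m.+1; split => //; split => j /andP[j1 jm]; last by lia.
  case: (ltnP j m.+1) => hj; first by apply: inc; lia.
  by have -> : j = m.+1 by lia.
exists m; split => //; split => // j /andP[j1 jm].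
have -> : j = m by lia.
exact: ltW.
Qed.

Lemma finish (a : nat -> R) m : (forall k, (k <= m)%N -> a k < 0) ->
  (forall j, a j * a j.+2 <= a j.+1 ^+ 2) ->
  log_concave (fun k => `|a k|) m /\ unimodal (fun k => `|a k|) m.
Proof.
move=> hn hl; split.
  move=> i /andP[i1 im]; case: i i1 im => [|j] // _ jm /=.
  rewrite !ltr0_norm ?hn //; try lia.
  by rewrite mulrNN sqrrN.
apply: unimodal_of => [k km|j jm] /=; first by rewrite normr_gt0 lt_eqF ?hn.
rewrite !ltr0_norm ?hn //; try lia.
by rewrite mulrNN sqrrN.
Qed.
End Aux.
Arguments PX {R} s.
Arguments splitp {R} q.
Arguments PX_neg_coef {R} s.
Arguments newton {R} q j.
Arguments finish {R} a m.

Theorem corollary2p3 (R : realType) (n : nat) (M : 'M[R]_n) :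
  M^T = M -> one_pos_rest_neg M ->
  (\tr M = 0 ->
     log_concave (fun k => `|(char_poly M)`_k|) n.-2 /\
     unimodal (fun k => `|(char_poly M)`_k|) n.-2) /\
  (0 < \tr M ->
     log_concave (fun k => `|(char_poly M)`_k|) n.-1 /\
     unimodal (fun k => `|(char_poly M)`_k|) n.-1).
Proof.
move=> _ [lam [hc [i0 [hp hneg]]]].
have n0 : (0 < n)%N by apply: leq_ltn_trans (ltn_ord i0).
set F := char_poly M; set p := lam i0.
set l := map lam [seq i <- index_enum 'I_n | i != i0].
have hQ : \prod_(i < n | i != i0) ('X - (lam i)%:P) = PX l.
  by rewrite /PX big_map big_filter.
have hF : F = ('X - p%:P) * PX l by rewrite /F hc (bigD1 i0) //= hQ.
have sF : splitp F by exists 1, (map lam (index_enum 'I_n)); rewrite scale1r /PX big_map /F hc.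
have sQ : splitp (PX l) by exists 1, l; rewrite scale1r.
have ln : all (fun x => x < 0) l.
  apply/allP => x /mapP [i]; rewrite mem_filter => /andP[ii0 _] ->; exact: hneg.
have [qnn qpos0] := PX_neg_coef l ln.
have szQ : size (PX l) = n.
  have Q0 : PX l != 0 by rewrite -size_poly_gt0 size_PX.
  have X0 : 'X - p%:P != 0 by rewrite -size_poly_gt0 size_XsubC.
  have := size_char_poly M; rewrite -/F hF size_mul // size_XsubC.
  by move=> /eqP; rewrite eqSS => /eqP.
have qpos k : (k < n)%N -> 0 < (PX l)`_k by rewrite -szQ size_PX; apply: qpos0.
have aF k : F`_k = (if k == 0%N then 0 else (PX l)`_k.-1) - p * (PX l)`_k.
  by rewrite hF mulrBl coefB coefXM coefCM.
have a0 : F`_0 < 0 by rewrite aF /= sub0r oppr_lt0 mulr_gt0 ?qpos.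
have step k : (k.+1 < n)%N -> F`_k.+1 <= 0 -> F`_k < 0.
  case: k => [|k] hk; first by move=> _; exact: a0.
  rewrite !aF /=.
  have q0 := qpos k (ltnW (ltnW hk)); have q1 := qpos k.+1 (ltnW hk).
  have q2 := qpos k.+2 hk.
  have [_ /(_ (mulr_gt0 q0 q2)) N] := newton _ k sQ.
  move: (PX l)`_k (PX l)`_k.+1 (PX l)`_k.+2 q0 q1 q2 N => x0 x1 x2 q0 q1 q2 N h.
  rewrite subr_lt0; rewrite subr_le0 in h.
  have h1 : x1 ^+ 2 <= p * x2 * x1 by rewrite expr2 ler_pM2r.
  have h2 : x0 * x2 < (p * x1) * x2 by apply: lt_le_trans N _; rewrite mulrAC.
  by rewrite ltr_pM2r in h2.
have down i : (i < n.-1)%N -> F`_(n.-1) <= 0 -> F`_(n.-1 - i.+1) < 0.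
  move=> + hd; elim: i => [|i IH] hi.
    apply: step; first lia.
    by have -> : ((n.-1 - 1).+1 = n.-1)%N by lia.
  apply: step; first lia.
  have -> : ((n.-1 - i.+2).+1 = n.-1 - i.+1)%N by lia.
  apply/ltW/IH; lia.
have allneg : F`_(n.-1) <= 0 -> forall k, (k < n.-1)%N -> F`_k < 0.
  move=> hd k hk; have := down (n.-1 - k.+1)%N _ hd.
  have -> : (n.-1 - (n.-1 - k.+1).+1 = k)%N by lia.
  by apply; lia.
have ht : F`_(n.-1) = - \tr M by rewrite char_poly_trace.
have NF j : F`_j * F`_j.+2 <= F`_j.+1 ^+ 2 by case: (newton _ j sF).
split=> htr.
  apply: (finish (fun k => F`_k)) => // k hk.
  case: (ltnP k n.-1) => hk'.
    by apply: allneg => //; rewrite ht htr oppr0.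
  by have -> : k = 0%N by lia.
apply: (finish (fun k => F`_k)) => // k hk.
case: (ltnP k n.-1) => hk'.
  by apply: allneg => //; rewrite ht oppr_le0 ltW.
have -> : k = n.-1 by lia.
by rewrite ht oppr_lt0.
Qed.
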